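(* Let $H=E+D$ and $K=E'+D'$ be closed additive subgroups of $\mathbb{R}^{n}$ (with decompositions as in the context) and let $f:H\to K$ be a homomorphism of closed additive groups. (i) If $f$ is injective, then $f:H\to f(H)$ is an isomorphism of closed additive groups. (ii) If $f$ is surjective and $F$ is a closed additive subgroup which is a supplement of $\mathrm{Ker}(f)$ in $H$ with defect $0$, then the restriction $f_{|F}:F\to K$ is an isomorphism of closed additive groups; moreover $\Re(\widetilde{\mathrm{dim}}(K))=\Re(\widetilde{\mathrm{dim}}(H))-\Re(\widetilde{\mathrm{dim}}(\mathrm{Ker}(f)))$.
   Context: Every closed additive subgroup $G$ of $\mathbb{R}^n$ can be written $G=E+D$ with $E$ a vector subspace and $D$ a discrete additive subgroup with $E\cap\mathrm{vect}(D)=\{0\}$ ($\mathrm{vect}$ = real span). For closed subgroups with such decompositions $G_1=E_1+D_1$, $G_2=E_2+D_2$, a map $g:G_1\to G_2$ is a homomorphism of closed additive groups if there are a linear map $g_1:E_1\to E_2$ and a group homomorphism $g_2:D_1\to D_2$ with $g(\lambda x+py)=\lambda g_1(x)+pg_2(y)$ for all $\lambda\in\mathbb{R}$, $p\in\mathbb{Z}$, $x\in E_1$, $y\in D_1$; it is an isomorphism of closed additive groups if it is invertible (with inverse of the same kind). Complex dimension: for an additive subgroup $G$, $\widetilde{\mathrm{dim}}(G):=p+i(q-p)$ with $p=\max\{\dim V: V\text{ a vector subspace},\ V\subset G\}$, $q=\dim\mathrm{vect}(G)$. A subgroup $F\subset H$ is a supplement of $\mathrm{Ker}(f)$ in $H$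 with defect $0$ if $F+\mathrm{Ker}(f)=H$, $\Re(\widetilde{\mathrm{dim}}(F\cap\mathrm{Ker}(f)))=0$ and $\Im(\widetilde{\mathrm{dim}}(F\cap\mathrm{Ker}(f)))=0$. *)

(* Defs.v *)
From HB Require Import structures.
From mathcomp Require Import all_boot all_order all_algebra.
From mathcomp Require Import all_classical all_reals all_analysis.

Set Implicit Arguments.
Unset Strict Implicit.
Unset Printing Implicit Defensive.

Import Order.TTheory GRing.Theory Num.Theory.
Import numFieldNormedType.Exports.
Local Open Scope classical_set_scope.
Local Open Scope ring_scope.

Section Defs.
Variables (R : realType) (n : nat).
Local Notation V := 'rV[R]_n.

Definition is_subgroup (G : set V) : Prop :=
  G 0 /\ (forall x y, G x -> G y -> G (x - y)).

Definition closed_subgroup (G : set V) : Prop := is_subgroup G /\ closed G.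

Definition is_vsub (E : set V) : Prop :=
  E 0 /\ (forall (a : R) x y, E x -> E y -> E (a *: x + y)).

Definition vect (S : set V) : set V :=
  [set x | forall W, is_vsub W -> S `<=` W -> W x].

Definition discrete_set (D : set V) : Prop :=
  forall x, D x -> exists U, nbhs x U /\ D `&` U = [set x].

Definition setsum (A B : set V) : set V :=
  [set z | exists x y, A x /\ B y /\ z = x + y].

Definition is_decomp (G E D : set V) : Prop :=
  [/\ is_vsub E, is_subgroup D, discrete_set D, G = setsum E D
    & E `&` vect D = [set 0]].

Definition cag_hom (E1 D1 E2 D2 : set V) (g : V -> V) : Prop :=
  exists g1 g2 : V -> V,
    [/\ (forall x, E1 x -> E2 (g1 x)),
        (forall (a b : R) x y, E1 x -> E1 y ->
           g1 (a *: x + b *: y) = a *: g1 x + b *: g1 y),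
        (forall y, D1 y -> D2 (g2 y)),
        (forall x y, D1 x -> D1 y -> g2 (x + y) = g2 x + g2 y)
      & (forall (l : R) (p : int) x y, E1 x -> D1 y ->
           g (l *: x + y *~ p) = l *: g1 x + (g2 y) *~ p)].

Definition cag_iso (G1 E1 D1 G2 E2 D2 : set V) (g : V -> V) : Prop :=
  cag_hom E1 D1 E2 D2 g /\
  exists h : V -> V,
    [/\ cag_hom E2 D2 E1 D1 h,
        (forall x, G1 x -> G2 (g x)),
        (forall y, G2 y -> G1 (h y)),
        (forall x, G1 x -> h (g x) = x)
      & (forall y, G2 y -> g (h y) = y)].

Definition vdim (W : set V) : nat :=
  xget 0%N [set d | exists M : 'M[R]_n,
    (forall v, W v <-> (v <= M)%MS) /\ \rank M = d].

Definition cdim_p (G : set V) : nat :=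
  xget 0%N [set d | (exists W, [/\ is_vsub W, W `<=` G & vdim W = d]) /\
                    (forall W, is_vsub W -> W `<=` G -> (vdim W <= d)%N)].

Definition cdim_q (G : set V) : nat := vdim (vect G).

(* complex dimension p + i (q - p), encoded as (real part, imaginary part) *)
Definition cdim (G : set V) : int * int :=
  ((cdim_p G)%:Z, (cdim_q G)%:Z - (cdim_p G)%:Z).
Definition cdim_Re (G : set V) : int := (cdim G).1.
Definition cdim_Im (G : set V) : int := (cdim G).2.

Definition kerH (H : set V) (f : V -> V) : set V := [set x | H x /\ f x = 0].

Definition supplement_defect0 (H : set V) (f : V -> V) (F : set V) : Prop :=
  [/\ F `<=` H, setsum F (kerH H f) = H,
      cdim_Re (F `&` kerH H f) = 0 & cdim_Im (F `&` kerH H f) = 0].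

End Defs.

(* Main.v *)
Require Import Defs.
From HB Require Import structures.
From mathcomp Require Import all_boot all_order all_algebra.
From mathcomp Require Import all_classical all_reals all_analysis.
From mathcomp Require Import lra.
Import Order.TTheory GRing.Theory Num.Theory.
Import numFieldNormedType.Exports.
Local Open Scope classical_set_scope.
Local Open Scope ring_scope.
Set Implicit Arguments. Unset Strict Implicit.

Section Aux.
Variables (R : realType) (n : nat).
Local Notation V := 'rV[R]_n.
Implicit Types (W E D G S : set V) (x y v d : V).

Lemma vsub0 W : is_vsub W -> W 0. Proof. by case. Qed.
Lemma vsubD W x y : is_vsub W -> W x -> W y -> W (x + y).
Proof. by case=> _ h Wx Wy; have := h 1 x y Wx Wy; rewrite scale1r. Qed.
Lemma vsubZ W a x : is_vsub W -> W x -> W (a *: x).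
Proof. by case=> W0 h Wx; have := h a x 0 Wx W0; rewrite addr0. Qed.
Lemma vsubN W x : is_vsub W -> W x -> W (- x).
Proof. by move=> hW Wx; rewrite -scaleN1r; apply: vsubZ. Qed.
Lemma vsubB W x y : is_vsub W -> W x -> W y -> W (x - y).
Proof. by move=> hW Wx Wy; apply: vsubD => //; apply: vsubN. Qed.

Lemma sg0 G : is_subgroup G -> G 0. Proof. by case. Qed.
Lemma sgB G x y : is_subgroup G -> G x -> G y -> G (x - y).
Proof. by case=> _ h; apply: h. Qed.
Lemma sgN G x : is_subgroup G -> G x -> G (- x).
Proof. by move=> hG Gx; rewrite -sub0r; apply: sgB => //; apply: sg0. Qed.
Lemma sgD G x y : is_subgroup G -> G x -> G y -> G (x + y).
Proof. by move=> hG Gx Gy; rewrite -[y]opprK; apply: sgB => //; apply: sgN. Qed.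
Lemma sgMn G x m : is_subgroup G -> G x -> G (x *+ m).
Proof.
move=> hG Gx; elim: m => [|m IH]; first by rewrite mulr0n; apply: sg0.
by rewrite mulrS; apply: sgD.
Qed.
Lemma sgMz G x p : is_subgroup G -> G x -> G (x *~ p).
Proof.
move=> hG Gx; case: p => m; first exact: sgMn.
by rewrite NegzE mulrNz; apply: sgN => //; apply: sgMn.
Qed.

Lemma vsub_sg W : is_vsub W -> is_subgroup W.
Proof. by move=> hW; split; [apply: vsub0|move=> x y; apply: vsubB]. Qed.

Lemma vect_vsub S : is_vsub (vect S).
Proof.
split; first by move=> W [].
move=> a x y hx hy W hW SW; have := hx W hW SW; have := hy W hW SW.
by case: hW => _ h Wy Wx; apply: h.
Qed.
Lemma sub_vect S : S `<=` vect S. Proof. by move=> x Sx W _; apply. Qed.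
Lemma vect_min S W : is_vsub W -> S `<=` W -> vect S `<=` W.
Proof. by move=> hW SW x; apply. Qed.
Lemma vect_mono S S' : S `<=` S' -> vect S `<=` vect S'.
Proof. by move=> ST x hx W hW TW; apply: hx => // y /ST /TW. Qed.

Lemma decomp_uniq E D x d x' d' : is_vsub E -> E `&` vect D = [set 0] ->
  E x -> vect D d -> E x' -> vect D d' -> x + d = x' + d' -> x = x' /\ d = d'.
Proof.
move=> hE ED Ex Dd Ex' Dd' e.
have h : x - x' = d' - d.
  have -> : x = (x + d) - d by rewrite addrK.
  rewrite e addrAC; rewrite [x' + d']addrC; by rewrite addrK.
have : (E `&` vect D) (x - x').
  split; first exact: vsubB.
  by rewrite h; exact: (vsubB (vect_vsub D) Dd' Dd).
rewrite ED /= => h0; split; first by apply/eqP; rewrite -subr_eq0 h0.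
by apply/esym/eqP; rewrite -subr_eq0 -h h0.
Qed.

Lemma vsub_sum W (M : 'M[R]_n) : is_vsub W -> (forall i, W (row i M)) ->
  forall u : V, W (u *m M).
Proof.
move=> hW hM u; rewrite mulmx_sum_row; apply: (big_ind W).
- exact: vsub0.
- by move=> a b; apply: vsubD.
- by move=> i _; apply: vsubZ.
Qed.

Lemma vsub_mx W : is_vsub W -> exists M : 'M[R]_n, forall v, W v <-> (v <= M)%MS.
Proof.
move=> hW.
have sum_ok (M : 'M[R]_n) : (forall v : V, (v <= M)%MS -> W v) -> forall v : V,
    W v -> forall w : V, (w <= M + v)%MS -> W w.
  move=> hM v Wv w /sub_addsmxP [[u1 u2] /= ->].
  apply: vsubD => //; first by apply: hM; apply: submxMl.
  by rewrite [u2]mx11_scalar mul_scalar_mx; apply: vsubZ.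
pose P r := `[< exists M : 'M[R]_n,
   (forall v : V, (v <= M)%MS -> W v) /\ \rank M = r >].
have exP : exists r, P r.
  exists 0%N; apply/asboolP; exists 0; split; last exact: mxrank0.
  by move=> v; rewrite submx0 => /eqP ->; apply: vsub0.
have ubP : forall r, P r -> (r <= n)%N.
  by move=> r /asboolP [M [_ <-]]; apply: rank_leq_col.
case: (ex_maxnP exP ubP) => r /asboolP [M [hM rM]] maxr.
exists M => v; split; last exact: hM.
move=> Wv; apply: contrapT => nvM.
have hM' := sum_ok M hM v Wv.
have : (\rank (M + v)%MS <= r)%N.
  by apply: maxr; apply/asboolP; exists (M + v)%MS.
rewrite -rM (geq_leqif (mxrank_leqif_sup (addsmxSl M v))) => h.
by apply: nvM; exact: submx_trans (addsmxSr M v) h.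
Qed.

Lemma vdim_mx W (M : 'M[R]_n) : (forall v, W v <-> (v <= M)%MS) -> vdim W = \rank M.
Proof.
move=> hM; rewrite /vdim; apply: xget_unique; first by exists M.
move=> d [M' [hM' <-]]; apply/eqmx_rank/andP; split; apply/row_subP => i.
  by apply/hM/hM'; exact: row_sub.
by apply/hM'/hM; exact: row_sub.
Qed.

Lemma vdim_le W1 W2 : is_vsub W1 -> is_vsub W2 -> W1 `<=` W2 -> (vdim W1 <= vdim W2)%N.
Proof.
move=> h1 h2 s12; have [M1 hM1] := vsub_mx h1; have [M2 hM2] := vsub_mx h2.
rewrite (vdim_mx hM1) (vdim_mx hM2); apply: mxrankS; apply/row_subP => i.
by apply/hM2/s12/hM1; exact: row_sub.
Qed.


Lemma cont_sum (T : topologicalType) (F : 'I_n -> T -> V) (s : seq 'I_n) (x : T) :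
  (forall i, {for x, continuous (F i)}) ->
  {for x, continuous (fun w => \sum_(j <- s) F j w)}.
Proof.
move=> hF; elim: s => [|i s IH].
  have -> : (fun w => \sum_(j <- [::]) F j w) = fun=> 0.
    by apply/funext=> w; rewrite big_nil.
  exact: cst_continuous.
have -> : (fun w => \sum_(j <- i :: s) F j w) =
          (fun w => F i w + \sum_(j <- s) F j w).
  by apply/funext=> w; rewrite big_cons.
exact: continuousD.
Qed.

Lemma mulmx_cont (P : 'M[R]_n) : continuous (fun v : V => v *m P).
Proof.
have -> : (fun v : V => v *m P) =
   (fun v : V => \sum_(i <- index_enum 'I_n) (fun i (v : V) => v 0 i *: row i P) i v).
  by apply/funext => v; rewrite mulmx_sum_row.
move=> v; apply: cont_sum => i.
apply: continuousZr_tmp; exact: coord_continuous.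
Qed.

Lemma vsub_closed W : is_vsub W -> closed W.
Proof.
move=> hW; have [M hM] := vsub_mx hW.
have -> : W = (fun v : V => v *m cokermx M) @^-1` [set 0].
  apply/seteqP; split => v /=.
    by move/hM; rewrite submxE => /eqP.
  by move=> h; apply/hM; rewrite submxE h.
apply: preimage_closed; first by move=> v _; apply: mulmx_cont.
apply: accessible_closed_set1; apply: hausdorff_accessible; exact: norm_hausdorff.
Qed.

Lemma disc_ball D : is_subgroup D -> discrete_set D ->
  exists2 e : R, 0 < e & forall d, D d -> `|d| < e -> d = 0.
Proof.
move=> hD dD; have [U [U0 DU]] := dD 0 (sg0 hD).
have /nbhs_ballP [e e0 eU] := U0.
exists e => // d Dd de.
have : (D `&` U) d.
  split => //; apply: eU; rewrite -ball_normE /ball_ /= sub0r normrN //.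
by rewrite DU.
Qed.

Lemma div0 D d : is_subgroup D -> discrete_set D -> D d ->
  (forall N : nat, exists dN, D dN /\ dN *+ N.+1 = d) -> d = 0.
Proof.
move=> hD dD Dd hdiv; have [e e0 he] := disc_ball hD dD.
set N := Num.trunc (`|d| / e).
have [dN [DdN edN]] := hdiv N.
have : dN = 0.
  apply: he => //.
  have h1 := truncnS_gt (`|d| / e).
  rewrite -/N ltr_pdivrMr // in h1.
  rewrite -edN normrMn -mulr_natr in h1.
  have hN : (0 : R) < N.+1%:R by rewrite ltr0Sn.
  nra.
by move=> dN0; rewrite -edN dN0 mul0rn.
Qed.

Lemma proj_ex E D : is_vsub E -> E `&` vect D = [set 0] ->
  exists P : 'M[R]_n, (forall x, E x -> x *m P = 0) /\ (forall d, vect D d -> d *m P = d).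
Proof.
move=> hE ED; have [ME hME] := vsub_mx hE; have [MD hMD] := vsub_mx (vect_vsub D).
have cap0 : (MD :&: ME)%MS = 0.
  apply/eqP; rewrite -submx0; apply/row_subP => i; rewrite submx0.
  have : (row i (MD :&: ME)%MS <= MD :&: ME)%MS by apply: row_sub.
  rewrite sub_capmx => /andP [/hMD h1 /hME h2].
  have : (E `&` vect D) (row i (MD :&: ME)%MS) by [].
  by rewrite ED /= => ->.
exists (proj_mx MD ME); split.
  by move=> x /hME Ex; apply: proj_mx_0.
by move=> d /hMD Dd; apply: proj_mx_id.
Qed.

Lemma disc_sub D1 D2 : D1 `<=` D2 -> discrete_set D2 -> discrete_set D1.
Proof.
move=> s12 d2 x D1x; have [U [Ux DU]] := d2 x (s12 x D1x).
exists U; split => //; apply/seteqP; split => y /=.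
  by move=> [/s12 D2y Uy]; have : (D2 `&` U) y by []; rewrite DU.
move=> ->; split => //; have : [set x] x by [].
by rewrite -DU => -[].
Qed.


Lemma E_of_div E D h : is_vsub E -> is_subgroup D -> discrete_set D ->
  E `&` vect D = [set 0] -> setsum E D h ->
  (forall N : nat, exists h', setsum E D h' /\ h' *+ N.+1 = h) -> E h.
Proof.
move=> hE hD dD ED [x [d [Ex [Dd ->]]]] hdiv.
suff -> : d = 0 by rewrite addr0.
apply: (div0 hD dD Dd) => N.
have [h' [[x' [d' [Ex' [Dd' eh']]]] eh]] := hdiv N.
exists d'; split => //.
rewrite eh' mulrnDl in eh.
have Ex1 : E (x' *+ N.+1) by rewrite -scaler_nat; apply: vsubZ.
have Dd1 : vect D (d' *+ N.+1) by apply: sub_vect; apply: sgMn.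
by have [_ ->] := decomp_uniq hE ED Ex1 Dd1 Ex (sub_vect Dd) eh.
Qed.

Lemma vsub_in_E E D W : is_vsub E -> is_subgroup D -> discrete_set D ->
  E `&` vect D = [set 0] -> is_vsub W -> W `<=` setsum E D -> W `<=` E.
Proof.
move=> hE hD dD ED hW WS w Ww; apply: (E_of_div hE hD dD ED (WS w Ww)) => N.
exists (N.+1%:R^-1 *: w); split; first by apply: WS; apply: vsubZ.
by rewrite -scaler_nat scalerA mulfV ?scale1r // pnatr_eq0.
Qed.

Lemma cdim_p_eq G W0 : is_vsub W0 -> W0 `<=` G ->
  (forall W, is_vsub W -> W `<=` G -> W `<=` W0) -> cdim_p G = vdim W0.
Proof.
move=> h0 W0G hmax; rewrite /cdim_p; apply: xget_unique.
  split; first by exists W0.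
  by move=> W hW WG; apply: vdim_le => //; apply: hmax.
move=> d [[W [hW WG <-]] hd]; apply/eqP; rewrite eqn_leq; apply/andP; split.
  by apply: vdim_le => //; apply: hmax.
exact: hd.
Qed.

Lemma setsum_vsub (A B : set V) : is_vsub A -> is_vsub B -> is_vsub (setsum A B).
Proof.
move=> hA hB; split.
  by exists 0, 0; split; [apply: (vsub0 hA)|split; [apply: (vsub0 hB)|rewrite addr0]].
move=> a _ _ [x [y [Ax [By ->]]]] [x' [y' [Ax' [By' ->]]]].
exists (a *: x + x'), (a *: y + y'); split; [|split].
- by case: hA => _; apply.
- by case: hB => _; apply.
- by rewrite scalerDr addrACA.
Qed.

Lemma rank_null E (g : V -> V) : is_vsub E ->
  (forall (a b : R) x y, E x -> E y -> g (a *: x + b *: y) = a *: g x + b *: g y) ->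
  vdim E = (vdim (g @` E) + vdim (E `&` [set x | g x = 0%R]))%N.
Proof.
move=> hE glin.
have [ME hME] := vsub_mx hE.
have rowE i : E (row i ME) by apply/hME; exact: row_sub.
pose G := \matrix_i g (row i ME).
have key (u : V) : g (u *m ME) = u *m G.
  rewrite !mulmx_sum_row.
  have : forall s : seq 'I_n, E (\sum_(i <- s) u 0 i *: row i ME) /\
      g (\sum_(i <- s) u 0 i *: row i ME) = \sum_(i <- s) u 0 i *: row i G.
    elim => [|i s [IH1 IH2]].
      rewrite !big_nil; split; first exact: (vsub0 hE).
      by have := glin 0 0 0 0 (vsub0 hE) (vsub0 hE); rewrite !scale0r addr0.
    rewrite !big_cons rowK; split; first by apply: vsubD => //; apply: vsubZ.
    by have := glin (u 0 i) 1 _ _ (rowE i) IH1; rewrite !scale1r => ->; rewrite IH2.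
  by move/(_ (index_enum _)) => [_].
pose A := pinvmx ME *m G.
have gA v : E v -> g v = v *m A.
  move=> /hME vE.
  have -> : g v = g ((v *m pinvmx ME) *m ME) by rewrite mulmxKpV.
  by rewrite key /A [RHS]mulmxA.
have himg w : (g @` E) w <-> (w <= ME *m A)%MS.
  split.
    move=> [v Ev <-]; rewrite gA //.
    have /submxP [u ->] : (v <= ME)%MS by apply/hME.
    by rewrite -mulmxA submxMl.
  move=> /submxP [u ->]; exists (u *m ME); first by apply/hME; apply: submxMl.
  by rewrite gA ?mulmxA //; apply/hME; apply: submxMl.
have hker w : (E `&` [set x | g x = 0%R]) w <-> (w <= ME :&: kermx A)%MS.
  rewrite sub_capmx sub_kermx; split.
    by move=> [Ew /= gw]; apply/andP; split; [apply/hME|rewrite -gA // gw].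
  move=> /andP [wE /eqP wA]; have Ew := (hME w).2 wE; split => //=.
  by rewrite gA.
by rewrite (vdim_mx hME) (vdim_mx himg) (vdim_mx hker) mxrank_mul_ker.
Qed.

End Aux.

Section Main.
Variables (R : realType) (n : nat).
Local Notation V := 'rV[R]_n.
Variables (H K E D E' D' : set V) (f g1 g2 : V -> V).
Hypotheses (hE : is_vsub E) (hD : is_subgroup D) (dD : discrete_set D)
  (HED : H = setsum E D) (ED : E `&` vect D = [set 0]).
Hypotheses (hE' : is_vsub E') (hD' : is_subgroup D') (dD' : discrete_set D')
  (KED : K = setsum E' D') (ED' : E' `&` vect D' = [set 0]).
Hypotheses (g1E : forall x, E x -> E' (g1 x))
  (g1lin : forall (a b : R) x y, E x -> E y -> g1 (a *: x + b *: y) = a *: g1 x + b *: g1 y)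
  (g2D : forall y, D y -> D' (g2 y))
  (g2add : forall x y, D x -> D y -> g2 (x + y) = g2 x + g2 y)
  (fdef : forall (l : R) (p : int) x y, E x -> D y -> f (l *: x + y *~ p) = l *: g1 x + (g2 y) *~ p).

Lemma g1_0 : g1 0 = 0.
Proof. by have := g1lin 0 0 (vsub0 hE) (vsub0 hE); rewrite !scale0r addr0. Qed.
Lemma g1D x y : E x -> E y -> g1 (x + y) = g1 x + g1 y.
Proof. by move=> Ex Ey; have := g1lin 1 1 Ex Ey; rewrite !scale1r. Qed.
Lemma g1Z a x : E x -> g1 (a *: x) = a *: g1 x.
Proof. by move=> Ex; have := g1lin a 0 Ex Ex; rewrite !scale0r !addr0. Qed.
Lemma g2_0 : g2 0 = 0.
Proof.
have h := g2add (sg0 hD) (sg0 hD); rewrite addr0 in h.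
by apply: (addrI (g2 0)); rewrite addr0 -h.
Qed.
Lemma f_ED x d : E x -> D d -> f (x + d) = g1 x + g2 d.
Proof. by move=> Ex Dd; have := fdef 1 1 Ex Dd; rewrite !scale1r !mulr1z. Qed.
Lemma fE x : E x -> f x = g1 x.
Proof. by move=> Ex; have := f_ED Ex (sg0 hD); rewrite !addr0 g2_0 addr0. Qed.
Lemma fD d : D d -> f d = g2 d.
Proof. by move=> Dd; have := f_ED (vsub0 hE) Dd; rewrite !add0r g1_0 add0r. Qed.
Lemma g2Mz d p : D d -> g2 (d *~ p) = g2 d *~ p.
Proof.
move=> Dd; rewrite -fD; last exact: sgMz.
by have := fdef 0 p (vsub0 hE) Dd; rewrite !scale0r !add0r.
Qed.

Lemma Hdec h : H h -> exists x d, [/\ E x, D d & h = x + d].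
Proof. by rewrite HED => -[x [d [Ex [Dd ->]]]]; exists x, d. Qed.
Lemma HE x : E x -> H x.
Proof. by move=> Ex; rewrite HED; exists x, 0; split => //; split; [apply: sg0|rewrite addr0]. Qed.
Lemma HD d : D d -> H d.
Proof. by move=> Dd; rewrite HED; exists 0, d; split; [apply: vsub0|split => //; rewrite add0r]. Qed.
Lemma H_sg : is_subgroup H.
Proof.
split; first by apply: HE; apply: vsub0.
move=> a b /Hdec [x [d [Ex Dd ->]]] /Hdec [x' [d' [Ex' Dd' ->]]].
rewrite HED; exists (x - x'), (d - d'); split; first exact: vsubB.
by split; [apply: sgB | rewrite opprD addrACA].
Qed.

Lemma f_add a b : H a -> H b -> f (a + b) = f a + f b.
Proof.
move=> /Hdec [x [d [Ex Dd ->]]] /Hdec [x' [d' [Ex' Dd' ->]]].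
have Ex2 : E (x + x') by apply: vsubD.
have Dd2 : D (d + d') by apply: sgD.
rewrite addrACA !f_ED //.
by rewrite g1D // g2add // addrACA.
Qed.
Lemma f_0 : f 0 = 0.
Proof. by rewrite fE ?g1_0 //; apply: vsub0. Qed.
Lemma f_opp a : H a -> f (- a) = - f a.
Proof.
move=> Ha; have Hna : H (- a) by apply: (sgN H_sg).
apply/eqP; rewrite -subr_eq0 opprK -f_add // addNr f_0 //.
Qed.
Lemma f_sub a b : H a -> H b -> f (a - b) = f a - f b.
Proof. by move=> Ha Hb; rewrite f_add ?f_opp //; apply: (sgN H_sg). Qed.
Lemma f_Mz a p : H a -> f (a *~ p) = f a *~ p.
Proof.
move=> /Hdec [x [d [Ex Dd ->]]].
have Ex' : E (x *~ p) by rewrite -scaler_int; apply: vsubZ.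
have Dd' : D (d *~ p) by apply: sgMz.
rewrite mulrzDl (f_ED Ex' Dd') (f_ED Ex Dd) -[x *~ p]scaler_int g1Z // g2Mz //.
by rewrite mulrzDl scaler_int.
Qed.
Lemma f_Mn a m : H a -> f (a *+ m) = f a *+ m.
Proof. by move=> Ha; have := f_Mz m Ha. Qed.
Lemma fZ l x : E x -> f (l *: x) = l *: g1 x.
Proof. by move=> Ex; rewrite fE ?g1Z //; apply: vsubZ. Qed.

Lemma fHK h : H h -> K (f h).
Proof.
move=> /Hdec [x [d [Ex Dd ->]]]; rewrite f_ED // KED.
by exists (g1 x), (g2 d); split; [apply: g1E | split; [apply: g2D|]].
Qed.
Lemma K_uniq x d e' d' : E' x -> D' d -> E' e' -> vect D' d' -> x + d = e' + d' ->
  x = e' /\ d = d'.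
Proof. by move=> Ex Dd Ee Dd' e; apply: (decomp_uniq hE' ED' Ex (sub_vect Dd) Ee Dd' e). Qed.
Lemma ker_split x d : E x -> D d -> f (x + d) = 0 -> g1 x = 0 /\ g2 d = 0.
Proof.
move=> Ex Dd; rewrite f_ED // => e.
have e2 : g1 x + g2 d = 0 + 0 by rewrite addr0.
exact: (K_uniq (g1E Ex) (g2D Dd) (vsub0 hE') (vsub0 (vect_vsub D')) e2).
Qed.


Section PartI.
Hypothesis hKc : closed K.
Hypothesis finj : forall a b, H a -> H b -> f a = f b -> a = b.

Lemma E2_vsub : is_vsub (g1 @` E).
Proof.
split; first by exists 0; [apply: vsub0 | apply: g1_0].
move=> a _ _ [x Ex <-] [y Ey <-]; exists (a *: x + y).
  by apply: vsubD => //; apply: vsubZ.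
by rewrite g1D ?g1Z //; apply: vsubZ.
Qed.

Lemma D2_sg : is_subgroup (g2 @` D).
Proof.
split; first by exists 0; [apply: sg0 | apply: g2_0].
move=> _ _ [x Dx <-] [y Dy <-]; exists (x - y); first exact: sgB.
by have := g2add (sgB hD Dx Dy) Dy; rewrite subrK => ->; rewrite addrK.
Qed.

Lemma fH_eq : f @` H = setsum (g1 @` E) (g2 @` D).
Proof.
apply/seteqP; split.
  move=> _ [h Hh <-]; have [x [d [Ex Dd ->]]] := Hdec Hh.
  exists (g1 x), (g2 d); split; first by exists x.
  by split; [exists d | apply: f_ED].
move=> _ [_ [_ [[x Ex <-] [[d Dd <-] ->]]]]; exists (x + d); last exact: f_ED.
by rewrite HED; exists x, d.
Qed.

Lemma fH_sg : is_subgroup (f @` H).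
Proof.
split; first by exists 0; [apply: (sg0 H_sg) | apply: f_0].
move=> _ _ [a Ha <-] [b Hb <-]; exists (a - b); first exact: (sgB H_sg).
exact: f_sub.
Qed.

Lemma fH_closed : closed (f @` H).
Proof.
move=> z cz.
have sub : f @` H `<=` K by move=> _ [h Hh <-]; apply: fHK.
have Kz : K z := hKc (closureS sub cz).
move: Kz; rewrite KED => -[e' [d' [Ee [Dd' ze]]]].
have [P [P0 P1]] := proj_ex hE' ED'.
have [r r0 hr] := disc_ball hD' dD'.
pose B1 := (fun w : V => w *m P) @^-1` ball (z *m P) r.
have cP : continuous (fun v : V => v *m P) by apply: mulmx_cont.
have nB1 : nbhs z B1 by apply: cP; apply: nbhsx_ballx.
have key w : (f @` H) w -> B1 w -> exists x d, [/\ E x, D d, w = g1 x + d' & g2 d = d'].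
  move=> [h Hh <-] hB; have [x [d [Ex Dd hxd]]] := Hdec Hh.
  have e2 : g2 d = d'.
    move: hB; rewrite /B1 /= -ball_normE /ball_ /= hxd f_ED // ze !mulmxDl.
    rewrite (P0 _ Ee) (P1 _ (sub_vect Dd')) (P0 _ (g1E Ex)) (P1 _ (sub_vect (g2D Dd))).
    rewrite !add0r => hd; apply/eqP; rewrite eq_sym -subr_eq0; apply/eqP.
    by apply: hr => //; apply: sgB => //; apply: g2D.
  by exists x, d; split => //; rewrite hxd f_ED // e2.
have [w [fw B1w]] := cz _ nB1.
have [x0 [d0 [Ex0 Dd0 _ e0]]] := key w fw B1w.
have cE : closure (g1 @` E) e'.
  move=> B /nbhs_ballP [eps eps0 epsB].
  have nI : nbhs z (B1 `&` ball z eps) by apply: filterI => //; apply: nbhsx_ballx.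
  have [w' [fw' [B1w' bw']]] := cz _ nI.
  have [x [d [Ex Dd wd _]]] := key w' fw' B1w'.
  exists (g1 x); split; first by exists x.
  apply: epsB; move: bw'; rewrite -ball_normE /ball_ /=.
  have -> : z - w' = e' - g1 x by rewrite ze wd opprD addrACA subrr addr0.
  by [].
have [x1 Ex1 ex1] := vsub_closed E2_vsub cE.
exists (x1 + d0); first by rewrite HED; exists x1, d0.
by rewrite f_ED // ex1 e0 ze.
Qed.

Lemma fH_decomp : is_decomp (f @` H) (g1 @` E) (g2 @` D).
Proof.
split.
- exact: E2_vsub.
- exact: D2_sg.
- by apply: (disc_sub _ dD') => _ [d Dd <-]; apply: g2D.
- exact: fH_eq.
apply/seteqP; split.
  move=> v [[x Ex <-] vD].
  have : (E' `&` vect D') (g1 x).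
    split; first exact: g1E.
    by apply: (vect_mono _ vD) => _ [d Dd <-]; apply: g2D.
  by rewrite ED'.
move=> v /= ->; split; first by exists 0; [apply: vsub0|apply: g1_0].
exact: (vsub0 (vect_vsub _)).
Qed.

Lemma fH_iso : cag_iso H E D (f @` H) (g1 @` E) (g2 @` D) f.
Proof.
split.
  by exists g1, g2; split => //; move=> x Ex; exists x.
pose h := fun y => xget 0 [set z | H z /\ f z = y].
have hP y : (f @` H) y -> H (h y) /\ f (h y) = y.
  by move=> [a Ha <-]; apply: (xgetPex 0 (P := [set z | H z /\ f z = f a])); exists a.
have hf x : H x -> h (f x) = x.
  move=> Hx; have [Hh fh] := hP (f x) (ex_intro2 _ _ x Hx erefl).
  exact: finj.
have hg1 x : E x -> h (g1 x) = x by move=> Ex; rewrite -fE // hf //; apply: HE.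
have hg2 d : D d -> h (g2 d) = d by move=> Dd; rewrite -fD // hf //; apply: HD.
exists h; split.
- exists h, h; split.
  + by move=> _ [x Ex <-]; rewrite hg1.
  + move=> a b _ _ [x Ex <-] [y Ey <-].
    by rewrite -g1lin // !hg1 //; apply: (vsubD hE); apply: (vsubZ _ hE).
  + by move=> _ [d Dd <-]; rewrite hg2.
  + by move=> _ _ [d Dd <-] [d' Dd' <-]; rewrite -g2add // !hg2 //; apply: sgD.
  + move=> l p _ _ [x Ex <-] [d Dd <-]; rewrite -fdef // hf ?hg1 ?hg2 //.
    rewrite HED; exists (l *: x), (d *~ p); split; first exact: vsubZ.
    by split => //; apply: sgMz.
- by move=> x Hx; exists x.
- by move=> y /hP [].
- exact: hf.
- by move=> y /hP [].
Qed.

End PartI.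


Lemma kerE_vsub : is_vsub (E `&` [set x | g1 x = 0]).
Proof.
split; first by split; [apply: (vsub0 hE) | apply: g1_0].
move=> a x y [Ex /= gx] [Ey /= gy]; split.
  by apply: (vsubD hE) => //; apply: (vsubZ _ hE).
by rewrite /= g1D ?g1Z ?gx ?gy ?scaler0 ?addr0 //; apply: (vsubZ _ hE).
Qed.

Lemma cdimH : cdim_p H = vdim E.
Proof.
apply: cdim_p_eq hE _ _; first by move=> x; apply: HE.
by move=> W hW WH; apply: (vsub_in_E hE hD dD ED hW); rewrite -HED.
Qed.

Lemma cdimK : cdim_p K = vdim E'.
Proof.
apply: cdim_p_eq hE' _ _.
  by move=> e Ee; rewrite KED; exists e, 0; split => //; split; [apply: sg0|rewrite addr0].
by move=> W hW WK; apply: (vsub_in_E hE' hD' dD' ED' hW); rewrite -KED.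
Qed.

Lemma cdimker : cdim_p (kerH H f) = vdim (E `&` [set x | g1 x = 0]).
Proof.
apply: cdim_p_eq kerE_vsub _ _.
  by move=> x [Ex gx]; split; [apply: HE | rewrite fE].
move=> W hW Wk.
have WE : W `<=` E.
  by apply: (vsub_in_E hE hD dD ED hW); rewrite -HED => y /Wk [].
move=> w Ww; split; first exact: WE.
by have [_ fw] := Wk w Ww; rewrite /= -(fE (WE w Ww)).
Qed.

Section PartII.
Hypothesis fHeq : f @` H = K.
Variable F : set V.
Hypothesis hF : closed_subgroup F.
Hypothesis hsup : supplement_defect0 H f F.

Lemma FH : F `<=` H. Proof. by case: hsup. Qed.
Lemma Fsg : is_subgroup F. Proof. by case: hF. Qed.
Lemma Fcl : closed F. Proof. by case: hF. Qed.

Lemma FK k : K k -> exists2 a, F a & f a = k.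
Proof.
rewrite -fHeq => -[h Hh <-]; move: Hh; case: hsup => _ <- _ _.
move=> [a [b [Fa [[Hb fb] ->]]]]; exists a => //.
by rewrite f_add ?fb ?addr0 //; apply: FH.
Qed.

Lemma Fker0 a : F a -> f a = 0 -> a = 0.
Proof.
case: hsup => _ _ hre him; rewrite /cdim_Re /cdim_Im /cdim /= in hre him.
rewrite hre subr0 in him.
set S := F `&` kerH H f in him.
have [M hM] := vsub_mx (vect_vsub S).
move: him; rewrite /cdim_q (vdim_mx hM) => -[/eqP]; rewrite mxrank_eq0 => /eqP M0.
move=> Fa fa0; have : vect S a by apply: sub_vect; split => //; split => //; apply: FH.
by move/hM; rewrite M0 submx0 => /eqP.
Qed.

Lemma injF a b : F a -> F b -> f a = f b -> a = b.
Proof.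
move=> Fa Fb fab; apply/eqP; rewrite -subr_eq0; apply/eqP; apply: Fker0.
  exact: (sgB Fsg).
by rewrite f_sub ?fab ?subrr //; apply: FH.
Qed.

Lemma KE' e : E' e -> K e.
Proof. by move=> Ee; rewrite KED; exists e, 0; split => //; split; [apply: sg0|rewrite addr0]. Qed.
Lemma KD' d : D' d -> K d.
Proof. by move=> Dd; rewrite KED; exists 0, d; split; [apply: vsub0|split => //; rewrite add0r]. Qed.

Lemma E'img e : E' e -> exists2 x, E x & g1 x = e.
Proof.
move=> Ee; have := KE' Ee; rewrite -fHeq => -[h Hh fh].
have [x [d [Ex Dd hxd]]] := Hdec Hh.
exists x => //; move: fh; rewrite hxd f_ED // => e2.
have e3 : g1 x + g2 d = e + 0 by rewrite addr0.
by have [] := K_uniq (g1E Ex) (g2D Dd) Ee (vsub0 (vect_vsub D')) e3.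
Qed.

Lemma F_div y : F y -> E' (f y) -> forall N : nat, exists z, F z /\ z *+ N.+1 = y.
Proof.
move=> Fy Ey N.
have [z Fz fz] := FK (KE' (vsubZ (N.+1%:R^-1) hE' Ey)).
exists z; split => //; apply: injF => //; first exact: (sgMn _ Fsg).
by rewrite f_Mn ?fz; [rewrite -scaler_nat scalerA mulfV ?scale1r // pnatr_eq0 | apply: FH].
Qed.

Lemma L_E' y : F y -> E' (f y) -> E y.
Proof.
move=> Fy Ey; apply: (E_of_div hE hD dD ED); first by rewrite -HED; apply: FH.
move=> N; have [z [Fz ez]] := F_div Fy Ey N; exists z; split => //.
by rewrite -HED; apply: FH.
Qed.

Lemma FZ a x : F x -> E x -> F (a *: x).
Proof.
move=> Fx Ex; have Efx : E' (f x) by rewrite fE //; apply: g1E.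
apply: Fcl => B /nbhs_ballP [r r0 rB].
pose c : R := (Num.trunc (`|x| / r)).+1%:R.
have c0 : 0 < c by rewrite ltr0Sn.
have hx : `|x| < r * c.
  by rewrite mulrC -ltr_pdivrMr //; apply: truncnS_gt.
pose m := Num.floor (a * c).
have /andP [m1 m2] := floor_itv (a * c).
rewrite intrD in m2.
have [z [Fz ez]] := F_div Fx Efx (Num.trunc (`|x| / r)).
exists (z *~ m); split; first exact: (sgMz _ Fsg).
have -> : z *~ m = (m%:~R / c) *: x.
  by rewrite -ez -scaler_nat scalerA mulfVK ?scaler_int // gt_eqF.
apply: rB; rewrite -ball_normE /ball_ /= -scalerBl normrZ.
set t := a - m%:~R / c.
have tc : t * c = a * c - m%:~R by rewrite /t mulrBl mulfVK // gt_eqF.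
have t0 : 0 <= t.
  by rewrite -(pmulr_lge0 _ c0) tc subr_ge0.
have t1 : t * c < 1 by rewrite tc; lra.
rewrite ger0_norm //.
have nx : 0 <= `|x| by [].
have h1 : t * `|x| * c <= `|x|.
  rewrite mulrAC -[leRHS]mul1r; apply: ler_wpM2r => //; exact: ltW.
have h2 : t * `|x| * c < r * c by apply: le_lt_trans h1 hx.
by rewrite ltr_pM2r in h2.
Qed.


Lemma EF_vsub : is_vsub (F `&` E).
Proof.
split; first by split; [apply: (sg0 Fsg) | apply: (vsub0 hE)].
move=> a x y [Fx Ex] [Fy Ey]; split.
  by apply: (sgD Fsg) => //; apply: FZ.
by apply: (vsubD hE) => //; apply: (vsubZ _ hE).
Qed.

Lemma DF_struct k : F k -> D' (f k) -> exists x d, [/\ E x, D d, k = x + d & g1 x = 0].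
Proof.
move=> Fk Dk; have [x [d [Ex Dd kxd]]] := Hdec (FH Fk).
exists x, d; split => //.
have e2 : g1 x + g2 d = 0 + f k by rewrite add0r kxd f_ED.
by have [] := K_uniq (g1E Ex) (g2D Dd) (vsub0 hE') (sub_vect Dk) e2.
Qed.

Lemma DF_sg : is_subgroup [set h | F h /\ D' (f h)].
Proof.
split; first by split; [apply: (sg0 Fsg) | rewrite f_0; apply: (sg0 hD')].
move=> a b [Fa Da] [Fb Db]; split; first exact: (sgB Fsg).
by rewrite f_sub; [apply: (sgB hD') | apply: FH | apply: FH].
Qed.

Lemma DF_disc : discrete_set [set h | F h /\ D' (f h)].
Proof.
move=> h [Fh Dh].
have [P [P0 P1]] := proj_ex hE ED.
have [r r0 hr] := disc_ball hD dD.
have cP : continuous (fun v : V => v *m P) by apply: mulmx_cont.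
exists ((fun v : V => v *m P) @^-1` ball (h *m P) r); split.
  by apply: cP; apply: nbhsx_ballx.
apply/seteqP; split => h' /=; last first.
  by move=> ->; split => //; apply: ballxx.
move=> [[Fh' Dh'] bh'].
have Fk : F (h' - h) by apply: (sgB Fsg).
have Dk : D' (f (h' - h)).
  by rewrite f_sub; [apply: (sgB hD') | apply: FH | apply: FH].
have [x [d [Ex Dd kxd gx]]] := DF_struct Fk Dk.
have d0 : d = 0.
  apply: hr => //; move: bh'; rewrite -ball_normE /ball_ /=.
  have -> : h *m P - h' *m P = - ((h' - h) *m P) by rewrite mulmxBl opprB.
  by rewrite normrN kxd mulmxDl (P0 _ Ex) (P1 _ (sub_vect Dd)) add0r.
have k0 : h' - h = 0.
  by apply: Fker0 => //; rewrite kxd d0 addr0 fE.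
by apply/eqP; rewrite -subr_eq0 k0.
Qed.

Lemma F_sum : F = setsum (F `&` E) [set h | F h /\ D' (f h)].
Proof.
apply/seteqP; split; last first.
  by move=> _ [x [k [[Fx _] [[Fk _] ->]]]]; exact: (sgD Fsg).
move=> h Fh; have := fHK (FH Fh); rewrite KED => -[e' [d' [Ee [Dd ehd]]]].
have [y Fy fy] := FK (KE' Ee).
have Ey : E y by apply: L_E' => //; rewrite fy.
exists y, (h - y); split; first by split.
split; last by rewrite addrC subrK.
split; first exact: (sgB Fsg).
rewrite f_sub; [|apply: FH|apply: FH] => //.
by rewrite fy ehd addrC addKr.
Qed.

Lemma EF_cap : (F `&` E) `&` vect [set h | F h /\ D' (f h)] = [set 0].
Proof.
pose W := setsum (E `&` [set x | g1 x = 0]) (vect D).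
have hW : is_vsub W by apply: setsum_vsub; [exact: kerE_vsub | exact: vect_vsub].
have sDW : [set h | F h /\ D' (f h)] `<=` W.
  move=> k [Fk Dk]; have [x [d [Ex Dd -> gx]]] := DF_struct Fk Dk.
  by exists x, d; split => //; split => //; apply: sub_vect.
apply/seteqP; split; last first.
  move=> v /= ->; split; first by split; [apply: (sg0 Fsg) | apply: (vsub0 hE)].
  exact: (vsub0 (vect_vsub _)).
move=> v [[Fv Ev] vD]; have := vect_min hW sDW vD.
move=> [x [w [[Ex gx] [Dw vxw]]]].
have w0 : w = 0.
  have : (E `&` vect D) w.
    split => //; have -> : w = v - x by rewrite vxw addrC addKr.
    exact: vsubB.
  by rewrite ED.
have vx : v = x by rewrite vxw w0 addr0.
by apply: Fker0 => //; rewrite fE // vx.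
Qed.

Lemma E'eq : E' = g1 @` E.
Proof.
apply/seteqP; split; first by move=> e /E'img [x Ex <-]; exists x.
by move=> _ [x Ex <-]; apply: g1E.
Qed.

Lemma cdim_eq : cdim_Re K = cdim_Re H - cdim_Re (kerH H f).
Proof.
rewrite /cdim_Re /cdim /= cdimK cdimH cdimker (rank_null hE g1lin) E'eq.
by rewrite PoszD addrK.
Qed.

Lemma F_iso : cag_iso F (F `&` E) [set h | F h /\ D' (f h)] K E' D' f.
Proof.
split.
  exists g1, f; split.
  - by move=> x [_ Ex]; apply: g1E.
  - by move=> a b x y [_ Ex] [_ Ey]; apply: g1lin.
  - by move=> y [].
  - by move=> x y [Fx _] [Fy _]; apply: f_add; apply: FH.
  - move=> l p x y [Fx Ex] [Fy _].
    have Hx : H (l *: x) := HE (vsubZ l hE Ex).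
    have Hy : H (y *~ p) := sgMz p H_sg (FH Fy).
    by rewrite f_add // fZ // f_Mz //; apply: FH.
pose h := fun y => xget 0 [set z | F z /\ f z = y].
have hP y : K y -> F (h y) /\ f (h y) = y.
  by move=> /FK [a Fa fa]; apply: (xgetPex 0 (P := [set z | F z /\ f z = y])); exists a.
have hf x : F x -> h (f x) = x.
  by move=> Fx; have [Fh fh] := hP _ (fHK (FH Fx)); apply: injF.
have hE1 y : E' y -> E (h y).
  by move=> Ey; have [Fh fh] := hP y (KE' Ey); apply: L_E' => //; rewrite fh.
exists h; split.
- exists h, h; split.
  + by move=> y Ey; split; [exact: (hP y (KE' Ey)).1 | exact: hE1].
  + move=> a b x y Ex Ey.
    have Exy : E' (a *: x + b *: y) by apply: (vsubD hE'); apply: (vsubZ _ hE').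
    have [Fhx fhx] := hP x (KE' Ex); have [Fhy fhy] := hP y (KE' Ey).
    have [Fh fh] := hP _ (KE' Exy).
    have Ehx := hE1 x Ex; have Ehy := hE1 y Ey.
    apply: injF => //; first by apply: (sgD Fsg); apply: FZ.
    rewrite fh fE; last by apply: (vsubD hE); apply: (vsubZ _ hE).
    by rewrite g1lin // -(fE Ehx) -(fE Ehy) fhx fhy.
  + by move=> y Dy; have [Fh fh] := hP y (KD' Dy); split => //; rewrite fh.
  + move=> x y Dx Dy.
    have [Fhx fhx] := hP x (KD' Dx); have [Fhy fhy] := hP y (KD' Dy).
    have [Fh fh] := hP _ (KD' (sgD hD' Dx Dy)).
    apply: injF => //; first exact: (sgD Fsg).
    by rewrite fh f_add ?fhx ?fhy //; apply: FH.
  + move=> l p x y Ex Dy.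
    have Kxy : K (l *: x + y *~ p).
      by rewrite KED; exists (l *: x), (y *~ p); split; [apply: vsubZ|split; [apply: sgMz|]].
    have [Fhx fhx] := hP x (KE' Ex); have [Fhy fhy] := hP y (KD' Dy).
    have [Fh fh] := hP _ Kxy.
    have Ehx := hE1 x Ex.
    have Fa : F (l *: h x) by apply: FZ.
    have Fb : F (h y *~ p) by apply: (sgMz _ Fsg).
    apply: injF => //; first exact: (sgD Fsg).
    rewrite fh f_add; [|apply: FH|apply: FH] => //.
    by rewrite fZ // -(fE Ehx) fhx f_Mz ?fhy //; apply: FH.
- by move=> x Fx; apply: fHK (FH Fx).
- by move=> y /hP [].
- exact: hf.
- by move=> y /hP [].
Qed.

End PartII.

End Main.

Theorem proposition4p3 (R : realType) (n : nat)
    (H K E D E' D' : set 'rV[R]_n) (f : 'rV[R]_n -> 'rV[R]_n) :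
  closed_subgroup H -> closed_subgroup K ->
  is_decomp H E D -> is_decomp K E' D' ->
  cag_hom E D E' D' f ->
  (* (i) *)
  ({in H &, injective f} ->
     closed_subgroup (f @` H) /\
     exists E'' D'', is_decomp (f @` H) E'' D'' /\
                     cag_iso H E D (f @` H) E'' D'' f) /\
  (* (ii) *)
  (f @` H = K ->
   forall F : set 'rV[R]_n, closed_subgroup F -> supplement_defect0 H f F ->
     (exists EF DF, is_decomp F EF DF /\ cag_iso F EF DF K E' D' f) /\
     cdim_Re K = cdim_Re H - cdim_Re (kerH H f)).
Proof.
move=> hH hK [hE hD dD HED ED] [hE' hD' dD' KED ED'] [g1 [g2 [g1E g1lin g2D g2add fdef]]].
split.
  move=> finj.
  have finj' : forall a b, H a -> H b -> f a = f b -> a = b.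
    by move=> a b Ha Hb; apply: finj; apply: mem_set.
  have hKc : closed K by case: hK.
  split.
    split.
      by apply: (fH_sg (H:=H) (E:=E) (D:=D) (f:=f) (g1:=g1) (g2:=g2)); eassumption.
    by apply: (fH_closed (H:=H) (K:=K) (E:=E) (D:=D) (E':=E') (D':=D') (f:=f) (g1:=g1) (g2:=g2)); eassumption.
  exists (g1 @` E), (g2 @` D); split.
    by apply: (fH_decomp (H:=H) (E:=E) (D:=D) (E':=E') (D':=D') (f:=f) (g1:=g1) (g2:=g2)); eassumption.
  by apply: (fH_iso (H:=H) (E:=E) (D:=D) (f:=f) (g1:=g1) (g2:=g2)); eassumption.
move=> fHeq F hF hsup; split; last first.
  by apply: (cdim_eq (H:=H) (K:=K) (E:=E) (D:=D) (E':=E') (D':=D') (f:=f) (g1:=g1) (g2:=g2)); eassumption.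
exists (F `&` E), [set h | F h /\ D' (f h)]; split.
  split.
  - by apply: (EF_vsub (H:=H) (K:=K) (E:=E) (D:=D) (E':=E') (D':=D') (f:=f) (g1:=g1) (g2:=g2)); eassumption.
  - by apply: (DF_sg (H:=H) (E:=E) (D:=D) (D':=D') (f:=f) (g1:=g1) (g2:=g2)); eassumption.
  - by apply: (DF_disc (H:=H) (E:=E) (D:=D) (E':=E') (D':=D') (f:=f) (g1:=g1) (g2:=g2)); eassumption.
  - by apply: (F_sum (H:=H) (K:=K) (E:=E) (D:=D) (E':=E') (D':=D') (f:=f) (g1:=g1) (g2:=g2)); eassumption.
  - by apply: (EF_cap (H:=H) (E:=E) (D:=D) (E':=E') (D':=D') (f:=f) (g1:=g1) (g2:=g2)); eassumption.
by apply: (F_iso (H:=H) (K:=K) (E:=E) (D:=D) (E':=E') (D':=D') (f:=f) (g1:=g1) (g2:=g2)); eassumption.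
Qed.
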